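(* Let $\mathcal T\subseteq\mathsf{mod}\Lambda$ be a functorially finite torsion class and let $\mathcal F\subseteq\mathsf{mod}\Lambda$ be a functorially finite torsion-free class. Then $\mathcal T\cap \mathcal F$ is functorially finite.
   Context: $\Lambda$ is a finite-dimensional algebra, $\mathsf{mod}\Lambda$ finitely generated left modules. A torsion class is a subcategory closed under extensions and quotients; a torsion-free class is one closed under extensions and submodules. A subcategory $\mathcal A$ is functorially finite if every $X\in\mathsf{mod}\Lambda$ admits a right $\mathcal A$-approximation $A_X\to X$ (every map from an object of $\mathcal A$ to $X$ factors through it) and a left $\mathcal A$-approximation $X\to A^X$ (every map from $X$ to an object of $\mathcal A$ factors through it), with $A_X,A^X\in\mathcal A$. *)

(* Defs.v *)
From HB Require Import structures.
From mathcomp Require Import all_boot all_algebra all_field.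
Set Implicit Arguments. Unset Strict Implicit. Unset Printing Implicit Defensive.
Import GRing.Theory.
Local Open Scope ring_scope.

(* A finitely generated left Lam-module = finite-dimensional F-vector space
   F^(mdim M) (row vectors) with action  a . v := v *m mact M a.
   Left module axiom a.(b.v) = (ab).v reads mact (a*b) = mact b *m mact a. *)
Record fmod (F : fieldType) (Lam : falgType F) := FMod {
  mdim : nat;
  mact : Lam -> 'M[F]_mdim;
  mact_lin : forall (k : F) (a b : Lam), mact (k *: a + b) = k *: mact a + mact b;
  mact1 : mact 1 = 1%:M;
  mactM : forall a b : Lam, mact (a * b) = mact b *m mact a
}.

(* F-linear maps X -> Y, as matrices acting on row vectors: x |-> x *m f. *)
Definition hom (F : fieldType) (Lam : falgType F) (X Y : fmod Lam) :=
  'M[F]_(mdim X, mdim Y).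

Definition is_hom (F : fieldType) (Lam : falgType F) (X Y : fmod Lam)
  (f : hom X Y) : Prop :=
  forall a : Lam, mact X a *m f = f *m mact Y a.

Definition subcat (F : fieldType) (Lam : falgType F) := fmod Lam -> Prop.

Definition closed_quot (F : fieldType) (Lam : falgType F) (C : subcat Lam) :=
  forall (X Y : fmod Lam) (g : hom X Y), is_hom g -> row_full g -> C X -> C Y.

Definition closed_sub (F : fieldType) (Lam : falgType F) (C : subcat Lam) :=
  forall (X Y : fmod Lam) (f : hom X Y), is_hom f -> row_free f -> C Y -> C X.

(* closed under extensions: for a short exact sequence 0 -> X -f-> Y -g-> Z -> 0
   (f injective, g surjective, im f = ker g), X, Z in C implies Y in C. *)
Definition closed_ext (F : fieldType) (Lam : falgType F) (C : subcat Lam) :=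
  forall (X Y Z : fmod Lam) (f : hom X Y) (g : hom Y Z),
    is_hom f -> is_hom g -> row_free f -> row_full g -> (f == kermx g)%MS ->
    C X -> C Z -> C Y.

Definition torsion_class (F : fieldType) (Lam : falgType F) (C : subcat Lam) :=
  closed_ext C /\ closed_quot C.

Definition torsionfree_class (F : fieldType) (Lam : falgType F) (C : subcat Lam) :=
  closed_ext C /\ closed_sub C.

(* composition of f : X -> Y and h : Y -> Z is f *m h (row-vector convention) *)
Definition right_approx (F : fieldType) (Lam : falgType F) (C : subcat Lam)
  (X A : fmod Lam) (f : hom A X) : Prop :=
  C A /\ is_hom f /\
  forall (B : fmod Lam) (g : hom B X), C B -> is_hom g ->
    exists h : hom B A, is_hom h /\ g = h *m f.

Definition left_approx (F : fieldType) (Lam : falgType F) (C : subcat Lam)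
  (X A : fmod Lam) (f : hom X A) : Prop :=
  C A /\ is_hom f /\
  forall (B : fmod Lam) (g : hom X B), C B -> is_hom g ->
    exists h : hom A B, is_hom h /\ g = f *m h.

Definition functorially_finite (F : fieldType) (Lam : falgType F) (C : subcat Lam) :=
  forall X : fmod Lam,
    (exists (A : fmod Lam) (f : hom A X), right_approx C f) /\
    (exists (A : fmod Lam) (f : hom X A), left_approx C f).

(* Main.v *)
Require Import Defs.
From mathcomp Require Import all_boot all_algebra all_field.
Set Implicit Arguments. Unset Strict Implicit. Unset Printing Implicit Defensive.
Import GRing.Theory.
Local Open Scope ring_scope.

Section Img.
Variables (F : fieldType) (Lam : falgType F) (A Y : fmod Lam) (a : Defs.hom A Y).
Hypothesis ha : is_hom a.

Local Notation i := (row_base a).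
Local Notation r := (\rank a).

Lemma img_stable (x : Lam) : (i *m mact Y x <= i)%MS.
Proof.
have : (i <= a)%MS by rewrite (eq_row_base a).
case/submxP=> D Ei; rewrite {1}Ei.
rewrite -mulmxA -ha mulmxA.
apply: submx_trans (submxMl _ _) _.
by rewrite (eq_row_base a).
Qed.

Definition img_act (x : Lam) : 'M[F]_r := i *m mact Y x *m pinvmx i.

Lemma img_key k (u : 'M[F]_(k, r)) x : u *m img_act x *m i = u *m i *m mact Y x.
Proof. by rewrite /img_act -mulmxA (mulmxKpV (img_stable x)) mulmxA. Qed.

Lemma img_lin (k : F) (x y : Lam) : img_act (k *: x + y) = k *: img_act x + img_act y.
Proof.
by rewrite /img_act mact_lin mulmxDr mulmxDl -scalemxAr -scalemxAl.
Qed.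

Lemma img_1 : img_act 1 = 1%:M.
Proof.
apply: (row_free_inj (row_base_free a)).
by rewrite -[img_act 1]mul1mx img_key mact1 !mulmx1 mul1mx.
Qed.

Lemma img_M x y : img_act (x * y) = img_act y *m img_act x.
Proof.
apply: (row_free_inj (row_base_free a)).
rewrite -[img_act (x*y)]mul1mx img_key mactM img_key -[img_act y]mul1mx img_key.
by rewrite !mul1mx mulmxA.
Qed.

Definition imgmod : fmod Lam := @FMod F Lam r img_act img_lin img_1 img_M.

Lemma image_fact : exists (I : fmod Lam) (p : Defs.hom A I) (j : Defs.hom I Y),
  is_hom p /\ is_hom j /\ row_full p /\ row_free j /\ a = p *m j.
Proof.
have ai : (a <= i)%MS by rewrite (eq_row_base a).
have E : a *m pinvmx i *m i = a by rewrite mulmxKpV.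
exists imgmod, (a *m pinvmx i : Defs.hom A imgmod), (i : Defs.hom imgmod Y).
split; last split; last split; last split.
- move=> x; apply: (row_free_inj (row_base_free a)).
  by rewrite /= img_key E -mulmxA E ha.
- by move=> x; rewrite /= -[img_act x]mul1mx img_key mul1mx.
- rewrite /row_full /=; apply/eqP.
  by rewrite -(mxrankMfree _ (row_base_free a)) E.
- exact: row_base_free.
- by rewrite E.
Qed.
End Img.

Theorem lemma2p1 (F : fieldType) (Lam : falgType F) (T Fr : subcat Lam) :
  torsion_class T -> functorially_finite T ->
  torsionfree_class Fr -> functorially_finite Fr ->
  functorially_finite (fun X => T X /\ Fr X).
Proof.
move=> [_ Tq] fT [_ Fs] fF X; split.
- have [[FX [f [FFX [hf Uf]]]] _] := fF X.
  have [[TX [t [TTX [ht Ut]]]] _] := fT FX.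
  have [I [p [j [hp [hj [fp [fj E]]]]]]] := image_fact ht.
  exists I, (j *m f); split; first split.
  + exact: Tq hp fp TTX.
  + exact: Fs hj fj FFX.
  split; first by move=> x; rewrite mulmxA hj -mulmxA hf mulmxA.
  move=> B g [TB FB] hg.
  have [h [hh ->]] := Uf B g FB hg.
  have [k [hk ->]] := Ut B h TB hh.
  exists (k *m p); split; first by move=> x; rewrite mulmxA hk -mulmxA hp mulmxA.
  by rewrite E !mulmxA.
- have [_ [TX [t [TTX [ht Ut]]]]] := fT X.
  have [_ [FX [f [FFX [hf Uf]]]]] := fF TX.
  have [I [p [j [hp [hj [fp [fj E]]]]]]] := image_fact hf.
  exists I, (t *m p); split; first split.
  + exact: Tq hp fp TTX.
  + exact: Fs hj fj FFX.
  split; first by move=> x; rewrite mulmxA ht -mulmxA hp mulmxA.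
  move=> B g [TB FB] hg.
  have [h [hh ->]] := Ut B g TB hg.
  have [k [hk ->]] := Uf B h FB hh.
  exists (j *m k); split; first by move=> x; rewrite mulmxA hj -mulmxA hk mulmxA.
  by rewrite E !mulmxA.
Qed.
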